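(* Let $n\ge 3$ and let $C\in\mathbb{R}^{n\times n}$ be nonnegative, doubly stochastic, irreducible, with zero diagonal entries. Let $x(s)$ evolve by the Modified DeGroot-Friedkin model $x(s+1)=C^\top x(s)+X(s)x(s)-C^\top X(s)x(s)$, $X(s)=\mathrm{diag}(x(s))$, with $x(0)\in\Delta$. Let $x(s)_{\max}=\max_i x_i(s)$. If for some $s$ we have $x(s)>0$ (all entries positive) and $x(s)\ne\tfrac1n\mathbf 1$, then $x(s+n-1)_{\max}<x(s)_{\max}$.
   Context: $\Delta=\{x\in\mathbb{R}^n: x\ge 0,\ \sum_i x_i=1\}$; $\mathbf 1$ is the all-ones vector. *)

(* Defs.v *)
From HB Require Import structures.
From mathcomp Require Import all_boot all_order all_algebra.
Set Implicit Arguments. Unset Strict Implicit. Unset Printing Implicit Defensive.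
Import Order.TTheory GRing.Theory Num.Theory.
Local Open Scope ring_scope.

Section Defs.
Variable R : realFieldType.

Definition nonneg_mx {m} (C : 'M[R]_m) : Prop := forall i j, 0 <= C i j.

Definition doubly_stochastic {m} (C : 'M[R]_m) : Prop :=
  nonneg_mx C /\ (forall i, \sum_j C i j = 1) /\ (forall j, \sum_i C i j = 1).

Definition irreducible_mx {m} (C : 'M[R]_m) : Prop :=
  forall i j : 'I_m, connect (fun a b => 0 < C a b) i j.

Definition zero_diag {m} (C : 'M[R]_m) : Prop := forall i, C i i = 0.

Definition in_simplex {m} (x : 'cV[R]_m) : Prop :=
  (forall i, 0 <= x i 0) /\ \sum_i x i 0 = 1.

Definition diagc {m} (x : 'cV[R]_m) : 'M[R]_m := diag_mx x^T.

Definition mdf_step {m} (C : 'M[R]_m) (x : 'cV[R]_m) : 'cV[R]_m :=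
  C^T *m x + diagc x *m x - C^T *m (diagc x *m x).

Definition vmax {m} (x : 'cV[R]_m.+1) : R :=
  \big[Num.max/x ord0 0]_(i < m.+1) x i 0.

End Defs.

(* Main.v *)
Require Import Defs.
From HB Require Import structures.
From mathcomp Require Import all_boot all_order all_algebra.
From mathcomp Require Import lra zify.
Import Order.TTheory GRing.Theory Num.Theory.
Local Open Scope ring_scope.

Section Aux.
Variable R : realFieldType.
Variable m : nat.
Implicit Types (C : 'M[R]_m.+1) (y : 'cV[R]_m.+1).

Lemma mdf_entry C y i :
  mdf_step C y i 0 = y i 0 * y i 0 + \sum_j C j i * (y j 0 - y j 0 * y j 0).
Proof.
rewrite /mdf_step /diagc mul_diag_mx !mxE.
have -> : \sum_j C^T i j * (\matrix_(i0, j0) (y^T 0 i0 * y i0 j0)) j 0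
   = \sum_j C j i * (y j 0 * y j 0).
  by apply: eq_bigr => j _; rewrite !mxE.
have -> : \sum_j C^T i j * y j 0 = \sum_j C j i * y j 0.
  by apply: eq_bigr => j _; rewrite !mxE.
rewrite [X in _ = _ + X](eq_bigr (fun j => C j i * y j 0 - C j i * (y j 0 * y j 0))).
  by rewrite sumrB; lra.
by move=> j _; rewrite mulrBr.
Qed.

Lemma vmax_ge y i : y i 0 <= vmax y.
Proof.
rewrite /vmax (bigD1 i) //= le_max lexx //.
Qed.

Lemma vmax_le y c : (forall i, y i 0 <= c) -> vmax y <= c.
Proof.
move=> H; rewrite /vmax; apply: (big_ind (fun v => v <= c)) => //.
by move=> a b Ha Hb; rewrite ge_max Ha Hb.
Qed.

Lemma vmax_att y : exists i, vmax y = y i 0.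
Proof.
rewrite /vmax; apply: (big_ind (fun v => exists i, v = y i 0)).
- by exists ord0.
- move=> a b [i ->] [j ->]; case: (leP (y i 0) (y j 0)) => h.
  + by exists j.
  + by exists i.
- by move=> i _; exists i.
Qed.

Lemma simplex_le1 y i : in_simplex y -> y i 0 <= 1.
Proof.
case=> h0 h1; rewrite -h1 (bigD1 i) //= lerDl; apply: sumr_ge0 => j _; exact: h0.
Qed.


Lemma g_ge0 y j : in_simplex y -> 0 <= y j 0 - y j 0 * y j 0.
Proof.
move=> hs; have h1 := @simplex_le1 y j hs; have h0 := hs.1 j; nra.
Qed.

Lemma step_simplex C y : doubly_stochastic C -> in_simplex y ->
  in_simplex (mdf_step C y).
Proof.
move=> [hnn [hrow hcol]] hs; split.
  move=> i; rewrite mdf_entry; apply: addr_ge0.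
    by have := hs.1 i; nra.
  apply: sumr_ge0 => j _; apply: mulr_ge0; [exact: hnn | exact: g_ge0].
under eq_bigr do rewrite mdf_entry.
rewrite big_split /= exchange_big /=.
under [X in _ + X = _]eq_bigr do rewrite -mulr_suml hrow mul1r.
by rewrite sumrB addrC subrK hs.2.
Qed.

Lemma step_pos C y : doubly_stochastic C -> in_simplex y ->
  (forall i, 0 < y i 0) -> forall i, 0 < mdf_step C y i 0.
Proof.
move=> [hnn _] hs hp i; rewrite mdf_entry; apply: ltr_wpDr.
  apply: sumr_ge0 => j _; apply: mulr_ge0; [exact: hnn | exact: g_ge0].
by apply: mulr_gt0.
Qed.


Lemma g_le_max y j : (2 < m.+1)%N -> in_simplex y -> (forall i, 0 < y i 0) ->
  y j 0 - y j 0 * y j 0 <= vmax y - vmax y * vmax y /\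
  (y j 0 - y j 0 * y j 0 = vmax y - vmax y * vmax y -> y j 0 = vmax y).
Proof.
move=> hn hs hp; have [k hk] := vmax_att y.
have hjM := vmax_ge y j.
case: (eqVneq j k) => [-> | hjk]; first by rewrite -hk; split.
have [l hl] : exists l, l \notin [set j; k].
  apply/existsP; apply: contraT; rewrite negb_exists => /forallP H.
  have E : [set j; k] = setT.
    by apply/setP => l; rewrite in_setT; move: (H l); rewrite negbK.
  have := cards2 j k; rewrite E cardsT card_ord hjk => e.
  by move: hn; rewrite e.
move: hl; rewrite !inE negb_or => /andP [hlj hlk].
have hsum : y j 0 + y k 0 + y l 0 <= 1.
  rewrite -hs.2 (bigD1 j) //= (bigD1 k) /=; last by rewrite eq_sym hjk.
  rewrite (bigD1 l) /=; last by rewrite hlj hlk.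
  rewrite !addrA lerDl; apply: sumr_ge0 => i _; exact: hs.1.
have hyl := hp l. rewrite hk in hjM *.
have h1 : 0 < 1 - y k 0 - y j 0 by lra.
have h2 : 0 <= y k 0 - y j 0 by lra.
split; first nra.
move=> e; have : (y k 0 - y j 0) * (1 - y k 0 - y j 0) = 0 by nra.
move/eqP; rewrite mulf_eq0 => /orP [/eqP|/eqP]; lra.
Qed.


Lemma step_bound C y i : (2 < m.+1)%N -> doubly_stochastic C -> in_simplex y ->
  (forall i, 0 < y i 0) ->
  mdf_step C y i 0 <= vmax y /\
  (mdf_step C y i 0 = vmax y ->
     y i 0 = vmax y /\ forall j, 0 < C j i -> y j 0 = vmax y).
Proof.
move=> hn [hnn [hrow hcol]] hs hp.
set M := vmax y; set G := M - M * M.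
pose D := \sum_j C j i * (G - (y j 0 - y j 0 * y j 0)).
have hD0 : 0 <= D.
  apply: sumr_ge0 => j _; apply: mulr_ge0; first exact: hnn.
  by rewrite subr_ge0; case: (g_le_max y j hn hs hp).
have hE : mdf_step C y i 0 = y i 0 * y i 0 + G - D.
  rewrite mdf_entry /D.
  under [X in _ = _ - X]eq_bigr do rewrite mulrBr.
  by rewrite sumrB -mulr_suml hcol mul1r; lra.
have hyi := vmax_ge y i; have hpi := hp i; rewrite -/M in hyi.
have hMM : y i 0 * y i 0 <= M * M by nra.
rewrite hE; split; first by rewrite /G; lra.
move=> e.
have hD : D = 0 by rewrite /G in e; nra.
split; first by rewrite /G in e; nra.
move=> j hCj.
have hnn' : forall j, true -> 0 <= C j i * (G - (y j 0 - y j 0 * y j 0)).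
  move=> j' _; apply: mulr_ge0; first exact: hnn.
  by rewrite subr_ge0; case: (g_le_max y j' hn hs hp).
have := @psumr_eq0P _ _ _ _ hnn' hD j isT.
move=> /eqP; rewrite mulf_eq0 (gt_eqF hCj) /= subr_eq0 => /eqP e2.
by case: (g_le_max y j hn hs hp) => _; apply; rewrite -e2.
Qed.

End Aux.
Theorem lemma5 (R : realFieldType) (m : nat) (hn : (3 <= m.+1)%N)
  (C : 'M[R]_m.+1)
  (hC : doubly_stochastic C) (hirr : irreducible_mx C) (hdiag : zero_diag C)
  (x : nat -> 'cV[R]_m.+1)
  (hx0 : in_simplex (x 0%N))
  (hstep : forall s, x s.+1 = mdf_step C (x s))
  (s : nat)
  (hpos : forall i, 0 < x s i 0)
  (hne : x s != const_mx (m.+1%:R)^-1) :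
  vmax (x (s + m)%N) < vmax (x s).
Proof.
have hn2 : (2 < m.+1)%N by exact: hn.
have hsimp : forall t, in_simplex (x t).
  elim => [|t IH]; first exact: hx0.
  by rewrite hstep; apply: step_simplex.
have hposk : forall k i, 0 < x (s + k)%N i 0.
  elim => [|k IH]; first by rewrite addn0.
  by rewrite addnS hstep; apply: step_pos.
have hmono : forall k, vmax (x (s + k).+1) <= vmax (x (s + k)%N).
  move=> k; apply: vmax_le => i; rewrite hstep.
  by case: (@step_bound R m C (x (s + k)%N) i hn2 hC (hsimp _) (hposk k)).
set M := vmax (x s).
have key : forall k, vmax (x (s + k)%N) < M \/
   (vmax (x (s + k)%N) = M /\ (#|[set i | x (s + k)%N i 0%R == M]| + k <= m)%N).
  elim => [|k IH].
    right; rewrite addn0; split => //.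
    have hT : [set i | x s i 0 == M] != setT.
      apply: contra hne => /eqP E; apply/eqP/matrixP => i j; rewrite ord1 mxE.
      have hall : forall i, x s i 0 = M.
        by move=> i'; have := in_setT i'; rewrite -E inE => /eqP.
      have h1 : \sum_(i' < m.+1) M = 1.
        by rewrite -(hsimp s).2; apply: eq_bigr => i' _; rewrite hall.
      rewrite sumr_const card_ord -mulr_natr in h1.
      have nz : (m.+1%:R : R) != 0 by rewrite pnatr_eq0.
      by rewrite hall; apply: (mulIf nz); rewrite h1 mulVf.
    move: hT; rewrite -properT => /proper_card; rewrite cardsT card_ord ltnS.
    by rewrite addn0.
  have hle := hmono k.
  rewrite addnS.
  case: IH => [hlt | [heq hcard]]; first by left; exact: le_lt_trans hle hlt.
  case: (ltP (vmax (x (s + k).+1)) M) => [h|hge]; first by left.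
  have heq' : vmax (x (s + k).+1) = M by apply/le_anti; rewrite hge -heq hle.
  right; split => //.
  set y := x (s + k)%N.
  set S := [set i | y i 0 == M].
  set S' := [set i | x (s + k).+1 i 0 == M].
  have hsub : forall i, i \in S' -> i \in S /\ (forall j, 0 < C j i -> j \in S).
    move=> i; rewrite inE => /eqP hi; rewrite hstep -/y -heq in hi.
    have [_ H] := @step_bound R m C y i hn2 hC (hsimp _) (hposk k).
    have [H1 H2] := H hi.
    split; first by rewrite inE H1 heq.
    by move=> j hj; rewrite inE (H2 j hj) heq.
  have hS'S : S' \subset S by apply/subsetP => i /hsub [].
  have hneq : S' != S.
    apply/eqP => E.
    have [i0 hi0] := @vmax_att R m (x (s + k).+1).
    have i0S : i0 \in S by rewrite -E inE -hi0 heq'.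
    have allS : forall j, j \in S.
      move=> j; have := hirr j i0; case/connectP => p hp e; move: i0S; rewrite e; clear e.
      elim: p j hp => [|a p IHp] j //=.
      move=> /andP [hja hpa] hl.
      have aS : a \in S by apply: IHp.
      by move: aS; rewrite -{1}E => /hsub [_ /(_ j hja)].
    have ST : S = setT by apply/setP => j; rewrite in_setT allS.
    move: hcard; rewrite -/y -/S ST cardsT card_ord; lia.
  have : S' \proper S by rewrite properEneq hneq hS'S.
  move/proper_card; move: hcard; rewrite -/y -/S; lia.
case: (key m) => [//| [heq hcard]].
have [i hi] := @vmax_att R m (x (s + m)%N).
have : (0 < #|[set i | x (s + m)%N i 0%R == M]|)%N.
  by apply/card_gt0P; exists i; rewrite inE -hi heq.
move: hcard; lia.
Qed.
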